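(* Let $f:\mathbb{R}^n\to\mathbb{R}^n$ be continuous, let $\Gamma\in\mathbb{R}^{n\times n}$, and let $L=(l_{ij})\in\mathbb{R}^{m\times m}$ be a coupling matrix (i.e. $l_{ij}\ge 0$ for $i\ne j$ and $\sum_{j=1}^m l_{ij}=0$ for every $i$) which is irreducible with $\mathrm{Rank}(L)=m-1$. Consider the coupled system $$\frac{dx_i(t)}{dt}=f(x_i(t))+c\sum_{j=1}^m l_{ij}\Gamma x_j(t),\qquad i=1,\dots,m,$$ with $x_i(t)\in\mathbb{R}^n$ and coupling strength $c>0$. Suppose there exist a positive definite matrix $P\in\mathbb{R}^{n\times n}$, a matrix $\Delta\in\mathbb{R}^{n\times n}$ and $\epsilon>0$ such that $f$ satisfies the QUAD condition $$(x-y)^T P\big\{[f(x)-f(y)]-\Delta(x-y)\big\}\le -\epsilon (x-y)^T(x-y)\quad\text{for all }x,y\in\mathbb{R}^n,$$ that $\mathrm{Ran}(P\Delta)=\mathrm{Ran}(P\Gamma)$ (in particular this holds if $\Delta=\Gamma$), and that $P\Gamma=BB^T$ for some matrix $B$ and $P\Gamma$ is positive definite on the range $\mathrm{Ran}(P\Gamma)$. Then the system reaches synchronization if the coupling strength $c$ is large enough.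
   Context: $\mathrm{Ran}(M)$ denotes the range (column space) of a matrix $M$. ''Positive definite on $\mathrm{Ran}(P\Gamma)$'' means $u^T P\Gamma u>0$ for every nonzero $u\in\mathrm{Ran}(P\Gamma)$. The system reaches synchronization if $\lim_{t\to\infty}\|x_i(t)-x_j(t)\|=0$ for all $i,j$ and all initial conditions. *)

(* Defs.v *)
From HB Require Import structures.
From mathcomp Require Import all_boot all_order all_algebra.
From mathcomp Require Import all_classical all_reals all_analysis.
Set Implicit Arguments. Unset Strict Implicit. Unset Printing Implicit Defensive.
Import Order.TTheory GRing.Theory Num.Theory.
Import numFieldNormedType.Exports.
Local Open Scope ring_scope.
Local Open Scope classical_set_scope.

Definition qform (R : realType) n (M : 'M[R]_n) (u : 'cV[R]_n) : R :=
  (u^T *m M *m u) 0 0.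

Definition posdef (R : realType) n (M : 'M[R]_n) : Prop :=
  M^T = M /\ forall u : 'cV[R]_n, u != 0 -> 0 < qform M u.

Definition Ran (R : realType) n p (M : 'M[R]_(n, p)) : set 'cV[R]_n :=
  [set u | exists v : 'cV[R]_p, u = M *m v].

Definition posdef_on (R : realType) n (M : 'M[R]_n) (S : set 'cV[R]_n) : Prop :=
  forall u, S u -> u != 0 -> 0 < qform M u.

Definition coupling_matrix (R : realType) m (L : 'M[R]_m) : Prop :=
  (forall i j, i != j -> 0 <= L i j) /\ (forall i, \sum_(j < m) L i j = 0).

(* irreducible matrix: for every nonempty proper subset S of indices there is
   an entry L i j <> 0 with i in S and j outside S (equivalently, L is not
   permutation-similar to a block triangular matrix). *)
Definition irreducible_mx (R : realType) m (L : 'M[R]_m) : Prop :=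
  forall S : {set 'I_m}, S != finset.set0 -> S != [set: 'I_m]%SET ->
    exists i j, [/\ i \in S, j \notin S & L i j != 0].

Definition QUAD (R : realType) n (f : 'cV[R]_n -> 'cV[R]_n)
    (P Delta : 'M[R]_n) (eps : R) : Prop :=
  forall x y : 'cV[R]_n,
    ((x - y)^T *m P *m ((f x - f y) - Delta *m (x - y))) 0 0
      <= - eps * ((x - y)^T *m (x - y)) 0 0.

Definition is_solution (R : realType) n m (f : 'cV[R]_n -> 'cV[R]_n)
    (Gamma : 'M[R]_n) (L : 'M[R]_m) (c : R) (x : 'I_m -> R -> 'cV[R]_n) : Prop :=
  forall (i : 'I_m) (t : R), 0 < t ->
    is_derive t 1 (x i) (f (x i t) + c *: \sum_(j < m) L i j *: (Gamma *m x j t)).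

Definition synchronizes (R : realType) n m (x : 'I_m -> R -> 'cV[R]_n) : Prop :=
  forall i j, (x i t - x j t) @[t --> +oo] --> (0 : 'cV[R]_n).

(* Main.v *)
Require Import Defs.
From HB Require Import structures.
From mathcomp Require Import all_boot all_order all_algebra finmap.
From mathcomp Require Import all_classical all_reals all_analysis.
From mathcomp Require Import ring lra.
Import Order.TTheory GRing.Theory Num.Theory.
Import numFieldNormedType.Exports.
Local Open Scope ring_scope.

Set Implicit Arguments. Unset Strict Implicit.
Definition bil {R : realType} {n} (M : 'M[R]_n) (u w : 'cV[R]_n) : R :=
  (u^T *m M *m w) 0 0.

Lemma bilE (R : realType) n (M : 'M[R]_n) u w :
  bil M u w = \sum_a \sum_b u a 0 * M a b * w b 0.
Proof.
rewrite /bil mxE exchange_big; apply: eq_bigr => b _; rewrite mxE big_distrl /=.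
by apply: eq_bigr => a _; rewrite !mxE.
Qed.

Lemma bilDl (R : realType) n (M : 'M[R]_n) u1 u2 w :
  bil M (u1 + u2) w = bil M u1 w + bil M u2 w.
Proof. by rewrite /bil linearD /= !mulmxDl mxE. Qed.

Lemma bilDr (R : realType) n (M : 'M[R]_n) u w1 w2 :
  bil M u (w1 + w2) = bil M u w1 + bil M u w2.
Proof. by rewrite /bil mulmxDr mxE. Qed.

Lemma bilZl (R : realType) n (M : 'M[R]_n) a u w :
  bil M (a *: u) w = a * bil M u w.
Proof. by rewrite /bil linearZ /= -!scalemxAl mxE. Qed.

Lemma bilZr (R : realType) n (M : 'M[R]_n) a u w :
  bil M u (a *: w) = a * bil M u w.
Proof. by rewrite /bil -scalemxAr mxE. Qed.

Lemma bilNl (R : realType) n (M : 'M[R]_n) u w :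
  bil M (- u) w = - bil M u w.
Proof. by rewrite -scaleN1r bilZl mulN1r. Qed.

Lemma bilNr (R : realType) n (M : 'M[R]_n) u w :
  bil M u (- w) = - bil M u w.
Proof. by rewrite -scaleN1r bilZr mulN1r. Qed.

Lemma bilBl (R : realType) n (M : 'M[R]_n) u1 u2 w :
  bil M (u1 - u2) w = bil M u1 w - bil M u2 w.
Proof. by rewrite bilDl bilNl. Qed.

Lemma bilBr (R : realType) n (M : 'M[R]_n) u w1 w2 :
  bil M u (w1 - w2) = bil M u w1 - bil M u w2.
Proof. by rewrite bilDr bilNr. Qed.

Lemma bil0l (R : realType) n (M : 'M[R]_n) w : bil M 0 w = 0.
Proof. by rewrite -(scale0r (0 : 'cV_n)) bilZl mul0r. Qed.

Lemma bil0r (R : realType) n (M : 'M[R]_n) w : bil M w 0 = 0.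
Proof. by rewrite -(scale0r (0 : 'cV_n)) bilZr mul0r. Qed.

Lemma bil_suml (R : realType) n m (M : 'M[R]_n) (a : 'I_m -> R) u w :
  bil M (\sum_i a i *: u i) w = \sum_i a i * bil M (u i) w.
Proof.
elim/big_ind2: _ => [|x1 x2 y1 y2 <- <-|i _]; first by rewrite bil0l.
  by rewrite bilDl.
by rewrite bilZl.
Qed.

Lemma bil_sumr (R : realType) n m (M : 'M[R]_n) (a : 'I_m -> R) u w :
  bil M u (\sum_i a i *: w i) = \sum_i a i * bil M u (w i).
Proof.
elim/big_ind2: _ => [|x1 x2 y1 y2 <- <-|i _]; first by rewrite bil0r.
  by rewrite bilDr.
by rewrite bilZr.
Qed.

Lemma bil_sym (R : realType) n (M : 'M[R]_n) u w :
  M^T = M -> bil M u w = bil M w u.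
Proof.
move=> HM; rewrite /bil.
have -> : (u^T *m M *m w) 0 0 = ((u^T *m M *m w)^T) 0 0 by rewrite [RHS]mxE.
by rewrite !trmx_mul trmxK HM mulmxA.
Qed.

Lemma bil1 (R : realType) n (u w : 'cV[R]_n) : bil 1%:M u w = (u^T *m w) 0 0.
Proof. by rewrite /bil mulmx1. Qed.

Lemma bil1E (R : realType) n (u : 'cV[R]_n) : bil 1%:M u u = \sum_a (u a 0) ^+ 2.
Proof. by rewrite bil1 mxE; apply: eq_bigr => a _; rewrite mxE expr2. Qed.

Lemma bil1_ge0 (R : realType) n (u : 'cV[R]_n) : 0 <= bil 1%:M u u.
Proof. by rewrite bil1E; apply: sumr_ge0 => a _; apply: sqr_ge0. Qed.

Lemma bil1_eq0 (R : realType) n (u : 'cV[R]_n) : bil 1%:M u u = 0 -> u = 0.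
Proof.
rewrite bil1E => H; apply/matrixP => a b; rewrite ord1 mxE.
have := psumr_eq0P (fun i _ => sqr_ge0 (u i 0)) H (isT : xpredT a).
by move=> h; have /eqP := h a; rewrite sqrf_eq0 => /eqP.
Qed.

Lemma bil1_gt0 (R : realType) n (u : 'cV[R]_n) : u != 0 -> 0 < bil 1%:M u u.
Proof.
move=> nz; rewrite lt_neqAle bil1_ge0 andbT eq_sym.
by apply/eqP => /bil1_eq0 H; move: nz; rewrite H eqxx.
Qed.

Lemma bilBBt (R : realType) n k (B : 'M[R]_(n, k)) (u w : 'cV[R]_n) :
  bil (B *m B^T) u w = bil 1%:M (B^T *m u) (B^T *m w).
Proof. by rewrite bil1 /bil trmx_mul trmxK !mulmxA. Qed.

Lemma bilM (R : realType) n (M N : 'M[R]_n) (u w : 'cV[R]_n) :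
  bil (M *m N) u w = bil M u (N *m w).
Proof. by rewrite /bil !mulmxA. Qed.

Unset Implicit Arguments.
Lemma exists_xi (R : realType) m (L : 'M[R]_m) : (0 < m)%N ->
  coupling_matrix L -> irreducible_mx L -> \rank L = m.-1 ->
  exists xi : 'I_m -> R, [/\ (forall i, 0 < xi i), \sum_i xi i = 1 &
     (forall j, \sum_i xi i * L i j = 0)].
Proof.
move=> m0 [Loff Lrow] Lirr Lrk.
have /det0P [v vnz vL] : \det L == 0.
  case: eqVneq => // dnz; exfalso.
  have : L \in unitmx by rewrite unitmxE unitfE.
  move/mxrank_unit; rewrite Lrk => h.
  move: m0 h; case: m {L Loff Lrow Lirr Lrk dnz} => // k _ /= /(congr1 (fun x => x - k)%N).
  by rewrite subSnn subnn.
have colv j : \sum_i v 0 i * L i j = 0.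
  by have := congr1 (fun M : 'rV[R]_m => M 0 j) vL; rewrite !mxE.
pose z i := `|v 0 i|.
have z0 i : 0 <= z i by apply: normr_ge0.
have Ldiag j : L j j <= 0.
  have := Lrow j; rewrite (bigD1 j) //= => h.
  have : 0 <= \sum_(k | k != j) L j k by apply: sumr_ge0 => k kj; apply: Loff; rewrite eq_sym.
  by move: h; move/eqP; rewrite addr_eq0 => /eqP ->; rewrite oppr_le0.
have Tge0 j : 0 <= \sum_i z i * L i j.
  rewrite (bigD1 j) //=.
  have := colv j; rewrite (bigD1 j) //= => /eqP; rewrite addr_eq0 => /eqP h.
  have h2 : `|v 0 j * L j j| <= \sum_(i | i != j) z i * L i j.
    rewrite h normrN; apply: le_trans (ler_norm_sum _ _ _) _.
    apply: ler_sum => i ij; rewrite normrM (ger0_norm (Loff _ _ ij)) //.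
  have h3 : z j * L j j = - `|v 0 j * L j j|.
    by rewrite normrM (ler0_norm (Ldiag j)) mulrN /z opprK.
  by rewrite h3 addrC subr_ge0.
have Tsum : \sum_j \sum_i z i * L i j = 0.
  rewrite exchange_big /=; apply: big1 => i _.
  by rewrite -mulr_sumr Lrow mulr0.
have T0 j : \sum_i z i * L i j = 0.
  by apply: (psumr_eq0P (fun j _ => Tge0 j) Tsum).
have znz : exists i, z i != 0.
  apply/existsP; apply: contraNT vnz; rewrite negb_exists => /forallP h.
  apply/eqP/matrixP => a b; rewrite ord1 !mxE.
  by have := h b; rewrite negbK normr_eq0 => /eqP.
have zpos i : 0 < z i.
  rewrite lt_neqAle z0 andbT eq_sym; apply/negP => /eqP zi0.
  pose S := [set k | z k != 0].
  have Sn0 : S != finset.set0.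
    case: znz => k kz; apply/set0Pn; exists k; by rewrite inE.
  have SnT : S != [set: 'I_m]%SET.
    apply/negP => /eqP ST; have : i \in S by rewrite ST inE.
    by rewrite inE zi0 eqxx.
  have [a [b [aS bS Lab]]] := Lirr S Sn0 SnT.
  move: aS bS; rewrite !inE negbK => za /eqP zb.
  have ab : a != b by apply: contraNneq za => ->; rewrite zb.
  have := T0 b.
  have tge i' : 0 <= z i' * L i' b.
    have [->|ib] := eqVneq i' b; first by rewrite zb mul0r.
    by apply: mulr_ge0 => //; apply: Loff.
  move/(psumr_eq0P (fun i' _ => tge i')) => /(_ a isT) /eqP.
  by rewrite mulf_eq0 (negPf za) (negPf Lab).
pose s := \sum_i z i.
have s0 : 0 < s.
  case: znz => k _; rewrite /s (bigD1 k) //=; apply: ltr_pwDl (zpos k) _.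
  by apply: sumr_ge0.
exists (fun i => z i / s); split.
- by move=> i; apply: divr_gt0.
- by rewrite -mulr_suml mulfV // gt_eqF.
- move=> j; under eq_bigr do rewrite mulrAC.
  by rewrite -mulr_suml T0 mul0r.
Qed.

Set Implicit Arguments. Unset Strict Implicit.
Local Open Scope classical_set_scope.
Lemma is_derive_coord (R : realType) p q (u : R -> 'M[R]_(p, q)) (t : R) (du : 'M[R]_(p, q)) a b :
  is_derive t 1 u du -> is_derive t 1 (fun s => u s a b) (du a b).
Proof.
move=> [Hd Hv].
have Hc : (fun h : R => h^-1 *: ((u \o shift t) (h *: 1) - u t)) @ 0^' --> du.
  by rewrite -Hv; apply: Hd.
have Hc2 : (fun h : R => h^-1 *: (((fun s => u s a b) \o shift t) (h *: 1) - u t a b)) @ 0^' --> du a b.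
  have -> : (fun h : R => h^-1 *: (((fun s => u s a b) \o shift t) (h *: 1) - u t a b)) =
    (fun M : 'M[R]_(p, q) => M a b) \o (fun h : R => h^-1 *: ((u \o shift t) (h *: 1) - u t)).
    by apply: funext => h /=; rewrite !mxE.
  apply: cvg_comp Hc _; apply: coord_continuous.
split; first by apply/cvg_ex; exists (du a b).
by apply: cvg_lim.
Qed.

Lemma is_derive_mul3 (R : realType) (f g : R -> R) (c t df dg : R) :
  is_derive t 1 f df -> is_derive t 1 g dg ->
  is_derive t 1 (fun s => f s * c * g s) (df * c * g t + f t * c * dg).
Proof.
move=> Hf Hg.
have H := is_deriveZ c (is_deriveM Hf Hg).
have -> : (fun s => f s * c * g s) = c \*: (f * g).
  apply: funext => s /=; change (f s * c * g s = c * (f s * g s)); by rewrite mulrAC mulrC mulrA.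
apply: is_derive_eq H _.
change (c * (f t * dg + g t * df) = df * c * g t + f t * c * dg); ring.
Qed.

Lemma is_derive_bil (R : realType) n (M : 'M[R]_n) (u w : R -> 'cV[R]_n) (t : R)
    (du dw : 'cV[R]_n) :
  is_derive t 1 u du -> is_derive t 1 w dw ->
  is_derive t 1 (fun s => bil M (u s) (w s)) (bil M du (w t) + bil M (u t) dw).
Proof.
move=> Hu Hw.
have -> : (fun s => bil M (u s) (w s)) =
    \sum_a \sum_b (fun s => u s a 0 * M a b * w s b 0).
  apply: funext => s; rewrite bilE fct_sumE; apply: eq_bigr => a _.
  by rewrite fct_sumE.
rewrite !bilE -big_split /=.
apply: is_derive_sum => a; rewrite -big_split /=.
apply: is_derive_sum => b.
apply: is_derive_mul3; exact: is_derive_coord.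
Qed.
Local Close Scope classical_set_scope.

Set Implicit Arguments. Unset Strict Implicit.
Local Open Scope classical_set_scope.
Lemma uniform_cover (R : realType) N (K : set 'rV[R]_N) (g : nat -> 'rV[R]_N -> R) :
  compact K -> (forall k, continuous (g k)) -> (forall k v, g k.+1 v <= g k v) ->
  (forall v, K v -> exists k, g k v < 0) ->
  exists k, forall k' v, (k <= k')%N -> K v -> g k' v < 0.
Proof.
move=> cK gc gm gev.
have mono k i v : (i <= k)%N -> g k v <= g i v.
  move=> /subnK <-; elim: (k - i)%N => [|d IH] //=.
  by rewrite addSn; apply: le_trans (gm _ _) IH.
move: cK; rewrite compact_cover => /(_ nat setT (fun k => g k @^-1` [set x | x < 0])).
case.
- move=> k _; apply: open_comp; last exact: open_lt.
  by move=> v _; apply: gc.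
- move=> v Kv; have [k gk] := gev v Kv; by exists k.
move=> D _ HD; exists (\max_(i <- D) i)%N => k' v kk' Kv.
have [i Di giv] := HD v Kv.
apply: le_lt_trans giv; apply: mono; apply: leq_trans kk'.
by apply: (@leq_bigmax_seq _ _ xpredT (fun i => i)).
Qed.

Lemma compact_sphere (R : realType) N (h : 'rV[R]_N -> R) : continuous h ->
  compact [set v | h v = 0 /\ `|v| = 1].
Proof.
move=> hc; apply: bounded_closed_compact.
  exists 1; split => // M M1 v [_ hv]; rewrite /= hv; exact: ltW.
have -> : [set v : 'rV[R]_N | h v = 0 /\ `|v| = 1] =
   h @^-1` [set x | x = 0] `&` (fun v => `|v|) @^-1` [set x | x = 1].
  by apply/seteqP; split => v /=.
apply: closedI; apply: (proj1 (continuous_closedP _)); try exact: closed_eq.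
  exact: hc.
exact: norm_continuous.
Qed.
Local Close Scope classical_set_scope.

Set Implicit Arguments. Unset Strict Implicit.
Local Open Scope classical_set_scope.
Definition ecol {R : realType} {n m} (v : 'rV[R]_(n * m)) (i : 'I_m) : 'cV[R]_n :=
  col i (vec_mx v).

Lemma cont_sum (R : realType) (T : topologicalType) (I : finType) (F : I -> T -> R) :
  (forall i, continuous (F i)) -> continuous (fun x => \sum_i F i x).
Proof.
move=> Fc x; rewrite -fct_sumE.
apply: (big_ind (fun f : T -> R => {for x, continuous f})).
- exact: cst_continuous.
- by move=> f g; apply: continuousD.
- move=> i _; exact: Fc.
Qed.

Lemma cont_mul (R : realType) (T : topologicalType) (f g : T -> R) :
  continuous f -> continuous g -> continuous (fun x => f x * g x).
Proof. move=> fc gc x; exact: (continuousM (fc x) (gc x)). Qed.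

Lemma cont_bil (R : realType) n m (M : 'M[R]_n) i j :
  continuous (fun v : 'rV[R]_(n * m) => bil M (ecol v i) (ecol v j)).
Proof.
have -> : (fun v : 'rV[R]_(n * m) => bil M (ecol v i) (ecol v j)) =
   (fun v => \sum_a \sum_b (v 0 (mxvec_index a i) * M a b) * v 0 (mxvec_index b j)).
  by apply: funext => v; rewrite bilE; apply: eq_bigr => a _; apply: eq_bigr => b _;
    rewrite /ecol !mxE.
apply: cont_sum => a; apply: cont_sum => b.
apply: cont_mul; last exact: coord_continuous.
apply: cont_mul; first exact: coord_continuous.
exact: cst_continuous.
Qed.

Definition Q1 {R : realType} {n m} (c : 'I_m -> R) (M : 'M[R]_n) (e : 'I_m -> 'cV[R]_n) :=
  \sum_i c i * bil M (e i) (e i).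
Definition Q2 {R : realType} {n m} (c : 'I_m -> 'I_m -> R) (M : 'M[R]_n)
  (e : 'I_m -> 'cV[R]_n) := \sum_i \sum_j c i j * bil M (e i) (e j).

Lemma cont_Q1 (R : realType) n m (c : 'I_m -> R) (M : 'M[R]_n) :
  continuous (fun v : 'rV[R]_(n * m) => Q1 c M (ecol v)).
Proof.
apply: cont_sum => i; apply: cont_mul; first exact: cst_continuous.
exact: cont_bil.
Qed.

Lemma cont_Q2 (R : realType) n m (c : 'I_m -> 'I_m -> R) (M : 'M[R]_n) :
  continuous (fun v : 'rV[R]_(n * m) => Q2 c M (ecol v)).
Proof.
apply: cont_sum => i; apply: cont_sum => j; apply: cont_mul; first exact: cst_continuous.
exact: cont_bil.
Qed.
Local Close Scope classical_set_scope.

Set Implicit Arguments. Unset Strict Implicit.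
Lemma BBt_sym (R : realType) n k (B : 'M[R]_(n, k)) : (B *m B^T)^T = B *m B^T.
Proof. by rewrite trmx_mul trmxK. Qed.

Lemma bilBBt_ge0 (R : realType) n k (B : 'M[R]_(n, k)) u : 0 <= bil (B *m B^T) u u.
Proof. by rewrite bilBBt bil1_ge0. Qed.

Lemma Cq_identity (R : realType) n m k (B : 'M[R]_(n, k)) (L : 'M[R]_m) (xi : 'I_m -> R)
   (e : 'I_m -> 'cV[R]_n) :
  (forall i, \sum_j L i j = 0) -> (forall j, \sum_i xi i * L i j = 0) ->
  \sum_i \sum_j xi i * L i j * bil (B *m B^T) (e i - e j) (e i - e j) =
  - 2 * Q2 (fun i j => xi i * L i j) (B *m B^T) e.
Proof.
move=> Lrow Lcol; set Q := B *m B^T.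
have term i j : xi i * L i j * bil Q (e i - e j) (e i - e j) =
   (xi i * L i j * bil Q (e i) (e i) + xi i * L i j * bil Q (e j) (e j))
   - 2 * (xi i * L i j * bil Q (e i) (e j)).
  rewrite bilBl !bilBr (bil_sym (e j) (e i) (BBt_sym B)); ring.
have -> : \sum_i \sum_j xi i * L i j * bil Q (e i - e j) (e i - e j) =
  (\sum_i \sum_j xi i * L i j * bil Q (e i) (e i) +
   \sum_i \sum_j xi i * L i j * bil Q (e j) (e j)) - 2 * Q2 (fun i j => xi i * L i j) Q e.
  rewrite /Q2 mulr_sumr -big_split -sumrB; apply: eq_bigr => i _.
  rewrite mulr_sumr -big_split -sumrB; apply: eq_bigr => j _; exact: term.
have -> : \sum_i \sum_j xi i * L i j * bil Q (e i) (e i) = 0.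
  apply: big1 => i _.
  under eq_bigr do rewrite mulrAC.
  by rewrite -mulr_sumr Lrow mulr0.
have -> : \sum_i \sum_j xi i * L i j * bil Q (e j) (e j) = 0.
  rewrite exchange_big /=; apply: big1 => j _.
  by rewrite -mulr_suml Lcol mul0r.
by rewrite add0r sub0r mulNr.
Qed.

Lemma Sterm_ge0 (R : realType) n m k (B : 'M[R]_(n, k)) (L : 'M[R]_m) (xi : 'I_m -> R)
   (e : 'I_m -> 'cV[R]_n) i j :
  (forall i j, i != j -> 0 <= L i j) -> (forall i, 0 < xi i) ->
  0 <= xi i * L i j * bil (B *m B^T) (e i - e j) (e i - e j).
Proof.
move=> Loff xpos; have [->|ij] := eqVneq i j; first by rewrite subrr bil0l mulr0.
apply: mulr_ge0; last exact: bilBBt_ge0.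
by apply: mulr_ge0; [apply: ltW | apply: Loff].
Qed.

Lemma Cq_le0 (R : realType) n m k (B : 'M[R]_(n, k)) (L : 'M[R]_m) (xi : 'I_m -> R)
   (e : 'I_m -> 'cV[R]_n) :
  coupling_matrix L -> (forall j, \sum_i xi i * L i j = 0) -> (forall i, 0 < xi i) ->
  Q2 (fun i j => xi i * L i j) (B *m B^T) e <= 0.
Proof.
move=> [Loff Lrow] Lcol xpos.
have := Cq_identity B e Lrow Lcol.
have : 0 <= \sum_i \sum_j xi i * L i j * bil (B *m B^T) (e i - e j) (e i - e j).
  by apply: sumr_ge0 => i _; apply: sumr_ge0 => j _; apply: Sterm_ge0.
move=> h1 h2; rewrite h2 in h1; lra.
Qed.

Lemma Cq_eq0 (R : realType) n m k (B : 'M[R]_(n, k)) (L : 'M[R]_m) (xi : 'I_m -> R)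
   (e : 'I_m -> 'cV[R]_n) :
  coupling_matrix L -> irreducible_mx L ->
  (forall j, \sum_i xi i * L i j = 0) -> (forall i, 0 < xi i) -> \sum_i xi i = 1 ->
  \sum_i xi i *: e i = 0 ->
  Q2 (fun i j => xi i * L i j) (B *m B^T) e = 0 -> forall i, B^T *m e i = 0.
Proof.
move=> [Loff Lrow] Lirr Lcol xpos xsum Sub C0 i.
have S0 := Cq_identity B e Lrow Lcol; rewrite C0 mulr0 in S0.
have edge a b : L a b != 0 -> B^T *m e a = B^T *m e b.
  move=> Lab; have [->//|ab] := eqVneq a b.
  have hge a' : true -> 0 <= \sum_b xi a' * L a' b * bil (B *m B^T) (e a' - e b) (e a' - e b).
    by move=> _; apply: sumr_ge0 => b' _; apply: Sterm_ge0.
  have h1 := @psumr_eq0P _ _ _ _ hge S0 a isT.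
  have h2 := @psumr_eq0P _ _ _ _ (fun b _ => Sterm_ge0 B e a b Loff xpos) h1 b isT.
  move/eqP: h2; rewrite !mulf_eq0 (gt_eqF (xpos a)) (negPf Lab) /= bilBBt => /eqP /bil1_eq0.
  by rewrite mulmxBr => /eqP; rewrite subr_eq0 => /eqP.
have all_eq j : B^T *m e j = B^T *m e i.
  pose S := [set j | B^T *m e j == B^T *m e i].
  have ST : S = [set: 'I_m]%SET.
    apply/eqP; apply/negPn/negP => SnT.
    have Sn0 : S != finset.set0 by apply/set0Pn; exists i; rewrite inE.
    have [a [b [aS bS Lab]]] := Lirr S Sn0 SnT.
    move: aS bS; rewrite !inE => /eqP ha /negP; apply.
    by rewrite -(edge a b Lab) ha.
  have : j \in S by rewrite ST inE.
  by rewrite inE => /eqP.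
have : B^T *m (\sum_j xi j *: e j) = B^T *m e i.
  rewrite mulmx_sumr; under eq_bigr do rewrite -scalemxAr all_eq.
  by rewrite -scaler_suml xsum scale1r.
by rewrite Sub mulmx0 => <-.
Qed.

Lemma PDelta0 (R : realType) n k (B : 'M[R]_(n, k)) (P Delta Gamma : 'M[R]_n) u :
  (forall u, Ran (P *m Delta) u -> Ran (P *m Gamma) u) -> P *m Gamma = B *m B^T ->
  B^T *m u = 0 -> bil (P *m Delta) u u = 0.
Proof.
move=> HR HB Bu.
have [w hw] : Ran (P *m Gamma) (P *m Delta *m u) by apply: HR; exists u.
rewrite /bil -mulmxA hw HB -!mulmxA mulmxA.
have -> : u^T *m B = (B^T *m u)^T by rewrite trmx_mul trmxK.
by rewrite Bu trmx0 mul0mx mxE.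
Qed.

Lemma Q1_ge0 (R : realType) n m (xi : 'I_m -> R) (M : 'M[R]_n) (e : 'I_m -> 'cV[R]_n) :
  (forall i, 0 < xi i) -> (forall u, 0 <= bil M u u) -> 0 <= Q1 xi M e.
Proof. by move=> xp Mp; apply: sumr_ge0 => i _; apply: mulr_ge0; [apply: ltW|]. Qed.

Lemma Q1_gt0 (R : realType) n m (xi : 'I_m -> R) (M : 'M[R]_n) (e : 'I_m -> 'cV[R]_n) i0 :
  (forall i, 0 < xi i) -> (forall u, 0 <= bil M u u) -> (forall u, u != 0 -> 0 < bil M u u) ->
  e i0 != 0 -> 0 < Q1 xi M e.
Proof.
move=> xp Mp Mpos ne; rewrite /Q1 (bigD1 i0) //=.
apply: ltr_pwDl; first by apply: mulr_gt0 => //; apply: Mpos.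
by apply: sumr_ge0 => i _; apply: mulr_ge0; [apply: ltW|].
Qed.

Set Implicit Arguments. Unset Strict Implicit.
Definition mat {R : realType} {n m} (e : 'I_m -> 'cV[R]_n) : 'M[R]_(n, m) :=
  \matrix_(a, i) e i a 0.

Lemma ecol_mat (R : realType) n m (e : 'I_m -> 'cV[R]_n) : ecol (mxvec (mat e)) = e.
Proof.
apply: funext => i; apply/matrixP => a b; rewrite ord1 /ecol mxvecK !mxE //.
Qed.

Lemma ecolZ (R : realType) n m (s : R) (v : 'rV[R]_(n * m)) :
  ecol (s *: v) = fun i => s *: ecol v i.
Proof. by apply: funext => i; apply/matrixP => a b; rewrite /ecol !mxE. Qed.

Lemma ecol_nz (R : realType) n m (v : 'rV[R]_(n * m)) : v != 0 -> exists i, ecol v i != 0.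
Proof.
move=> vnz; have : vec_mx v != 0.
  by apply: contraNneq vnz => h; rewrite -(vec_mxK v) h linear0.
move=> hv.
have [a [i hai]] : exists a i, vec_mx v a i != 0.
  case: (pselect (exists a i, vec_mx v a i != 0)) => // H; exfalso.
  move/negP: hv; apply; apply/eqP/matrixP => a i; rewrite [RHS]mxE.
  by apply/eqP/negPn/negP => h; apply: H; exists a, i.
exists i; apply/eqP => /matrixP /(_ a 0).
by rewrite /ecol !mxE => h; move: hai; rewrite /vec_mx mxE h eqxx.
Qed.

Lemma coord_le (R : realType) p q (M : 'M[R]_(p, q)) a b : `|M a b| <= `|M|.
Proof.
rewrite [leRHS]/Num.norm /= mx_normrE; apply/bigmax_geP; right => /=.
by exists (a, b).
Qed.

Lemma ecol_le (R : realType) n m (v : 'rV[R]_(n * m)) i a : `|ecol v i a 0| <= `|v|.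
Proof. by rewrite /ecol !mxE coord_le. Qed.

Lemma Q1Z (R : realType) n m (c : 'I_m -> R) (M : 'M[R]_n) (e : 'I_m -> 'cV[R]_n) s :
  Q1 c M (fun i => s *: e i) = s ^+ 2 * Q1 c M e.
Proof.
rewrite /Q1 mulr_sumr; apply: eq_bigr => i _; rewrite bilZl bilZr; ring.
Qed.

Lemma Q2Z (R : realType) n m (c : 'I_m -> 'I_m -> R) (M : 'M[R]_n) (e : 'I_m -> 'cV[R]_n) s :
  Q2 c M (fun i => s *: e i) = s ^+ 2 * Q2 c M e.
Proof.
rewrite /Q2 mulr_sumr; apply: eq_bigr => i _; rewrite mulr_sumr; apply: eq_bigr => j _.
rewrite bilZl bilZr; ring.
Qed.

Lemma Q2sub (R : realType) n m (xi : 'I_m -> R) (e : 'I_m -> 'cV[R]_n) :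
  Q2 (fun i j => xi i * xi j) 1%:M e =
  bil 1%:M (\sum_i xi i *: e i) (\sum_i xi i *: e i).
Proof.
rewrite bil_suml /Q2; apply: eq_bigr => i _; rewrite bil_sumr mulr_sumr.
by apply: eq_bigr => j _; rewrite mulrA.
Qed.

Lemma cont_add (R : realType) (T : topologicalType) (f g : T -> R) :
  continuous f -> continuous g -> continuous (fun x => f x + g x).
Proof. move=> fc gc x; exact: (continuousD (fc x) (gc x)). Qed.

Lemma cont_scal (R : realType) (T : topologicalType) (c : R) (f : T -> R) :
  continuous f -> continuous (fun x => c * f x).
Proof. by move=> fc; apply: cont_mul => //; exact: cst_continuous. Qed.

Set Implicit Arguments. Unset Strict Implicit.
Lemma key_bound (R : realType) n m k0 (B : 'M[R]_(n, k0)) (L : 'M[R]_m) (xi : 'I_m -> R)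
    (P Delta Gamma : 'M[R]_n) (eps : R) :
  coupling_matrix L -> irreducible_mx L ->
  (forall i, 0 < xi i) -> \sum_i xi i = 1 -> (forall j, \sum_i xi i * L i j = 0) ->
  posdef P -> 0 < eps ->
  (forall u, Ran (P *m Delta) u -> Ran (P *m Gamma) u) -> P *m Gamma = B *m B^T ->
  exists k : nat, forall e : 'I_m -> 'cV[R]_n, \sum_i xi i *: e i = 0 ->
   Q1 xi (P *m Delta) e + (- eps) * Q1 xi 1%:M e
     + k%:R * Q2 (fun i j => xi i * L i j) (P *m Gamma) e
      <= - (k.+1%:R)^-1 * Q1 xi P e /\
   (forall i a, (e i a 0) ^+ 2 <= k.+1%:R * Q1 xi P e).
Proof.
move=> Lc Li xp xs xc [Psym Ppos] epos HR HB.
pose A e := Q1 xi (P *m Delta) e + (- eps) * Q1 xi 1%:M e.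
pose C e := Q2 (fun i j => xi i * L i j) (P *m Gamma) e.
pose V e := Q1 xi P e.
have Pge0 u : 0 <= bil P u u.
  by have [->|/Ppos/ltW//] := eqVneq u 0; rewrite bil0l.
have Vge0 e : 0 <= V e by apply: Q1_ge0.
have Cle0 e : C e <= 0 by rewrite /C HB; apply: Cq_le0.
have Vgt0 e i : e i != 0 -> 0 < V e by move=> ne; apply: (Q1_gt0 (i0 := i)).
have Aneg e i : \sum_i xi i *: e i = 0 -> C e = 0 -> e i != 0 -> A e < 0.
  move=> S C0 ne; rewrite /C HB in C0.
  have BT := Cq_eq0 Lc Li xc xp xs S C0; rewrite /A.
  have -> : Q1 xi (P *m Delta) e = 0.
    by apply: big1 => j _; rewrite (PDelta0 HR HB (BT j)) mulr0.
  have : 0 < Q1 xi 1%:M e.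
    by apply: (Q1_gt0 (i0 := i)) => // u; [apply: bil1_ge0 | apply: bil1_gt0].
  move=> h; rewrite add0r mulNr oppr_lt0; exact: mulr_gt0.
pose h (v : 'rV[R]_(n * m)) := Q2 (fun i j => xi i * xi j) 1%:M (ecol v).
pose K := [set v : 'rV[R]_(n * m) | h v = 0 /\ `|v| = 1]%classic.
have cK : compact K by apply: compact_sphere; apply: cont_Q2.
have Ksub v : K v -> \sum_i xi i *: ecol v i = 0.
  by case; rewrite /h Q2sub => /bil1_eq0.
have Knz v : K v -> exists i, ecol v i != 0.
  case=> _ hv; apply: ecol_nz; apply/eqP => v0; move: hv; rewrite v0 normr0.
  by move/eqP; rewrite eq_sym oner_eq0.
have contA : continuous (fun v : 'rV[R]_(n * m) => A (ecol v)).
  by apply: cont_add; [apply: cont_Q1 | apply: cont_scal; apply: cont_Q1].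
have contC : continuous (fun v : 'rV[R]_(n * m) => C (ecol v)) by apply: cont_Q2.
have contV : continuous (fun v : 'rV[R]_(n * m) => V (ecol v)) by apply: cont_Q1.
have invle k : (k.+2%:R)^-1 <= (k.+1%:R)^-1 :> R.
  by rewrite lef_pV2 ?ler_nat // posrE ltr0n.
have invpos k : 0 < (k.+1%:R)^-1 :> R by rewrite invr_gt0 ltr0n.
have invle1 k : (k.+1%:R)^-1 <= 1 :> R by rewrite invf_le1 ?ltr0n // ler1n.
pose g k v := A (ecol v) + k%:R * C (ecol v) + (k.+1%:R)^-1 * V (ecol v).
have [k1 Hk1] : exists k, forall k' v, (k <= k')%N -> K v -> g k' v < 0.
  apply: uniform_cover cK _ _ _.
  - move=> k; apply: cont_add; first apply: cont_add => //; by apply: cont_scal.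
  - move=> k v; rewrite /g.
    have h1 : (k.+2%:R)^-1 * V (ecol v) <= (k.+1%:R)^-1 * V (ecol v).
      by apply: ler_wpM2r.
    have h2 : k.+1%:R * C (ecol v) = k%:R * C (ecol v) + C (ecol v).
      by rewrite -natr1 mulrDl mul1r.
    have := Cle0 (ecol v).
    move: h1 h2; set p1 := _ * V _; set p2 := _ * V _; set p3 := _ * C _; set p4 := _ * C _.
    move=> *; lra.
  - move=> v Kv; have [i ni] := Knz v Kv.
    have S := Ksub v Kv; have w0 := Vgt0 _ _ ni; have c0 := Cle0 (ecol v).
    have [cz|cn] := eqVneq (C (ecol v)) 0.
      have a0 := Aneg _ _ S cz ni.
      pose k := Num.Def.archi_bound (V (ecol v) / - A (ecol v)).
      have hk : V (ecol v) / - A (ecol v) < k%:R.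
        by apply: archi_boundP; apply: divr_ge0; [apply: ltW | rewrite oppr_ge0 ltW].
      exists k; rewrite /g cz mulr0 addr0.
      rewrite ltr_pdivrMr ?oppr_gt0 // in hk.
      have hk2 : V (ecol v) < k.+1%:R * - A (ecol v).
        apply: lt_le_trans hk _; apply: ler_wpM2r; first by rewrite oppr_ge0 ltW.
        by rewrite ler_nat.
      have : (k.+1%:R)^-1 * V (ecol v) < - A (ecol v).
        by rewrite mulrC ltr_pdivrMr ?ltr0n // mulrC.
      set p := _ * V _; move=> *; lra.
    have cneg : C (ecol v) < 0 by rewrite lt_neqAle cn c0.
    pose k := Num.Def.archi_bound ((`|A (ecol v)| + V (ecol v)) / - C (ecol v)).
    have hk : (`|A (ecol v)| + V (ecol v)) / - C (ecol v) < k%:R.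
      by apply: archi_boundP; apply: divr_ge0; [apply: addr_ge0 | rewrite oppr_ge0 ltW].
    exists k; rewrite /g.
    rewrite ltr_pdivrMr ?oppr_gt0 // in hk.
    have h1 : (k.+1%:R)^-1 * V (ecol v) <= V (ecol v) by apply: ler_piMl.
    have h2 : A (ecol v) <= `|A (ecol v)| by apply: ler_norm.
    have h3 : k%:R * - C (ecol v) = - (k%:R * C (ecol v)) by rewrite mulrN.
    move: h1 h3 hk; set p1 := _ * V _; set p2 := k%:R * - _; set p3 := k%:R * C _.
    move=> *; lra.
pose g2 k v := (k.+1%:R)^-1 + (-1) * V (ecol v).
have [k2 Hk2] : exists k, forall k' v, (k <= k')%N -> K v -> g2 k' v < 0.
  apply: uniform_cover cK _ _ _.
  - by move=> k; apply: cont_add; [apply: cst_continuous | apply: cont_scal].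
  - by move=> k v; rewrite /g2 lerD2r.
  - move=> v Kv; have [i ni] := Knz v Kv; have w0 := Vgt0 _ _ ni.
    pose k := Num.Def.archi_bound ((V (ecol v))^-1).
    have hk : (V (ecol v))^-1 < k%:R by apply: archi_boundP; rewrite invr_ge0 ltW.
    exists k; rewrite /g2 mulN1r subr_lt0.
    rewrite -[X in _ < X]invrK ltf_pV2 ?posrE ?invr_gt0 ?ltr0n //.
    by apply: lt_le_trans hk _; rewrite ler_nat.
exists (maxn k1 k2) => e Se.
pose v := mxvec (mat e).
have ev : ecol v = e by apply: ecol_mat.
have [v0|vnz] := eqVneq v 0.
  have e0 : e = fun i => 0 *: ecol v i.
    by apply: funext => i; rewrite v0 scale0r -ev v0; apply/matrixP => a b; rewrite /ecol !mxE; reflexivity.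
  rewrite e0 !Q1Z !Q2Z !expr2 !mul0r !mulr0 !addr0; split => // i a.
  by rewrite scale0r mxE expr2 mul0r.
have s0 : 0 < `|v| by rewrite normr_gt0.
pose s := `|v|.
pose v' := s^-1 *: v.
have ev' : ecol v' = fun i => s^-1 *: e i by rewrite /v' ecolZ ev.
have Kv' : K v'.
  split; first by rewrite /h ev' Q2Z Q2sub Se bil0l mulr0.
  by rewrite /v' normrZ ger0_norm ?invr_ge0 ?ltW // mulVf ?gt_eqF.
have := Hk1 (maxn k1 k2) v' (leq_maxl _ _) Kv'.
have := Hk2 (maxn k1 k2) v' (leq_maxr _ _) Kv'.
rewrite /g /g2 /A /C /V ev' !Q1Z !Q2Z.
set Ae := Q1 xi (P *m Delta) e; set Ie := Q1 xi 1%:M e.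
set Ce := Q2 _ (P *m Gamma) e; set Ve := Q1 xi P e.
set kk := maxn k1 k2.
have sp : 0 < s^-1 ^+ 2 by rewrite exprn_gt0 // invr_gt0.
move=> H2 H1; split.
  have : s^-1 ^+ 2 * (Ae + - eps * Ie + kk%:R * Ce + (kk.+1%:R)^-1 * Ve) < 0.
    by move: H1; rewrite !mulrDr; congr (_ < _); ring.
  rewrite pmulr_rlt0 //.
  rewrite !mulNr; set p1 := eps * Ie; set p2 := kk%:R * Ce; set p3 := _ * Ve.
  move=> *; lra.
move=> i a.
have hc : `|e i a 0| <= s by rewrite -ev; apply: ecol_le.
have hsq : e i a 0 ^+ 2 <= s ^+ 2.
  rewrite -real_normK ?num_real //; apply: lerXn2r => //; rewrite ?nnegrE ?ltW //.
have H3 : (kk.+1%:R)^-1 < s^-1 ^+ 2 * Ve by move: H2; rewrite mulN1r subr_lt0.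
have : s ^+ 2 < kk.+1%:R * Ve.
  have s2 : 0 < s ^+ 2 by rewrite exprn_gt0.
  rewrite -(ltr_pM2l s2) mulrA -exprMn mulfV ?gt_eqF // expr1n mul1r in H3.
  by rewrite mulrC -ltr_pdivrMr ?ltr0n.
by move=> h4; apply: le_trans hsq (ltW h4).
Qed.

Set Implicit Arguments. Unset Strict Implicit.
Lemma is_derive_lincomb (R : realType) n m (a : 'I_m -> R) (y : 'I_m -> R -> 'cV[R]_n)
   (t : R) (dy : 'I_m -> 'cV[R]_n) :
  (forall k, is_derive t 1 (y k) (dy k)) ->
  is_derive t 1 (fun s => \sum_k a k *: y k s) (\sum_k a k *: dy k).
Proof.
move=> Hy.
have -> : (fun s => \sum_k a k *: y k s) = \sum_k (a k \*: y k).
  by apply: funext => s; rewrite fct_sumE.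
apply: is_derive_sum => k; exact: is_deriveZ.
Qed.

Lemma is_derive_sub (R : realType) n (y z : R -> 'cV[R]_n) (t : R) (dy dz : 'cV[R]_n) :
  is_derive t 1 y dy -> is_derive t 1 z dz ->
  is_derive t 1 (fun s => y s - z s) (dy - dz).
Proof. by move=> Hy Hz; exact: is_deriveB. Qed.

Lemma is_derive_rsum (R : realType) m (a : 'I_m -> R) (y : 'I_m -> R -> R)
   (t : R) (dy : 'I_m -> R) :
  (forall k, is_derive t 1 (y k) (dy k)) ->
  is_derive t 1 (fun s => \sum_k a k * y k s) (\sum_k a k * dy k).
Proof.
move=> Hy.
have -> : (fun s => \sum_k a k * y k s) = \sum_k (a k \*: y k).
  by apply: funext => s; rewrite fct_sumE.
apply: is_derive_sum => k; exact: is_deriveZ.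
Qed.

Lemma norm_le_coord (R : realType) n (w : 'cV[R]_n) (d : R) :
  0 <= d -> (forall a, `|w a 0| <= d) -> `|w| <= d.
Proof.
move=> d0 H; rewrite [leLHS]/Num.norm /= mx_normrE; apply: bigmax_le => //.
by case=> a b _ /=; rewrite ord1.
Qed.

Set Implicit Arguments. Unset Strict Implicit.
Lemma dV_bound (R : realType) (n m : nat)
    (f : 'cV[R]_n -> 'cV[R]_n) (Gamma : 'M[R]_n) (L : 'M[R]_m)
    (P Delta : 'M[R]_n) (eps : R) k0 (B : 'M[R]_(n, k0)) (xi : 'I_m -> R) (k : nat) (c : R)
    (x : 'I_m -> R -> 'cV[R]_n) (t : R) :
  coupling_matrix L -> P^T = P -> QUAD f P Delta eps ->
  (forall i, 0 < xi i) -> \sum_i xi i = 1 -> (forall j, \sum_i xi i * L i j = 0) ->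
  P *m Gamma = B *m B^T ->
  (forall e : 'I_m -> 'cV[R]_n, \sum_i xi i *: e i = 0 ->
   Q1 xi (P *m Delta) e + (- eps) * Q1 xi 1%:M e
     + k%:R * Q2 (fun i j => xi i * L i j) (P *m Gamma) e
      <= - (k.+1%:R)^-1 * Q1 xi P e) ->
  k%:R <= c ->
  is_solution f Gamma L c x -> 0 < t ->
  let e := fun s i => x i s - \sum_j xi j *: x j s in
  exists dV, is_derive t 1 (fun s => Q1 xi P (e s)) dV /\
    dV <= - (2 * (k.+1%:R)^-1) * Q1 xi P (e t).
Proof.
move=> Lc Psym HQ xp xs xc HB Hk kc Hx t0 e.
have Se s : \sum_i xi i *: e s i = 0.
  rewrite /e; under eq_bigr do rewrite scalerBr.
  by rewrite sumrB -scaler_suml xs scale1r subrr.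
pose dx i := f (x i t) + c *: \sum_j L i j *: (Gamma *m x j t).
pose de i := dx i - \sum_j xi j *: dx j.
have Hde i : is_derive t 1 (fun s => e s i) (de i).
  apply: is_derive_sub; first exact: Hx.
  by apply: is_derive_lincomb => j; exact: Hx.
exists (\sum_i xi i * (bil P (de i) (e t i) + bil P (e t i) (de i))); split.
  by apply: is_derive_rsum => i; apply: is_derive_bil.
have Hsym u w : bil P u w = bil P w u := bil_sym u w Psym.
set V := Q1 xi P (e t).
set xb := \sum_j xi j *: x j t.
have sum0 W : \sum_i xi i * bil P (e t i) W = 0 by rewrite -bil_suml Se bil0l.
have T i : bil P (e t i) (de i) =
   bil P (e t i) (f (x i t) - f xb)
   + c * \sum_j L i j * bil (P *m Gamma) (e t i) (e t j)
   - bil P (e t i) (\sum_j xi j *: dx j) + bil P (e t i) (f xb).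
  rewrite /de /dx bilBr bilDr bilZr bil_sumr.
  have -> : \sum_j L i j * bil P (e t i) (Gamma *m x j t) =
            \sum_j L i j * bil (P *m Gamma) (e t i) (e t j).
    transitivity (\sum_j (L i j * bil (P *m Gamma) (e t i) (e t j)
                 + L i j * bil (P *m Gamma) (e t i) xb)).
      apply: eq_bigr => j _; rewrite !bilM -mulrDr; congr (_ * _).
      by rewrite -bilDr -mulmxDr /e subrK.
    by rewrite big_split /= -mulr_suml (proj2 Lc) mul0r addr0.
  rewrite bilBr; ring.
have D2 : \sum_i xi i * (bil P (de i) (e t i) + bil P (e t i) (de i)) =
          2 * \sum_i xi i * bil P (e t i) (de i).
  rewrite mulr_sumr; apply: eq_bigr => i _; rewrite (Hsym (de i)); ring.
pose a i := bil P (e t i) (f (x i t) - f xb).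
pose C := Q2 (fun i j => xi i * L i j) (P *m Gamma) (e t).
have D1 : \sum_i xi i * bil P (e t i) (de i) = \sum_i xi i * a i + c * C.
  transitivity (\sum_i (xi i * a i
      + c * (xi i * \sum_j L i j * bil (P *m Gamma) (e t i) (e t j))
      - xi i * bil P (e t i) (\sum_j xi j *: dx j) + xi i * bil P (e t i) (f xb))).
    by apply: eq_bigr => i _; rewrite T /a; ring.
  rewrite big_split /= sumrB big_split /= sum0 sum0 subr0 addr0 -mulr_sumr.
  congr (_ + c * _); rewrite /C /Q2; apply: eq_bigr => i _; rewrite mulr_sumr.
  by apply: eq_bigr => j _; rewrite mulrA.
have QA : \sum_i xi i * a i <=
    Q1 xi (P *m Delta) (e t) + (- eps) * Q1 xi 1%:M (e t).
  rewrite /Q1 mulr_sumr -big_split /=; apply: ler_sum => i _.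
  rewrite mulrCA -mulrDr; apply: ler_wpM2l; first exact: ltW.
  have := HQ (x i t) xb.
  change (bil P (e t i) ((f (x i t) - f xb) - Delta *m e t i)
     <= - eps * ((e t i)^T *m (e t i)) 0 0 ->
     a i <= bil (P *m Delta) (e t i) (e t i) + - eps * bil 1%:M (e t i) (e t i)).
  rewrite bilBr -bilM -bil1 /a; lra.
have HkC := Hk (e t) (Se t).
have Cle0 : C <= 0 by rewrite /C HB; apply: Cq_le0.
have cC : c * C <= k%:R * C by apply: ler_wnM2r.
rewrite D2 D1; rewrite -/C -/V in HkC.
move: HkC QA cC; set ik := (k.+1%:R)^-1; set kk := (k%:R : R); set A1 := Q1 xi (P *m Delta) (e t); set I1 := Q1 xi 1%:M (e t); set S1 := \sum_i xi i * a i.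
rewrite !mulNr -mulrA; set p1 := eps * I1; set p2 := kk * C; set p3 := c * C; set p4 := ik * V.
move=> *; lra.
Qed.

Unset Implicit Arguments.
Theorem proposition1 (R : realType) (n m : nat)
    (f : 'cV[R]_n -> 'cV[R]_n) (Gamma : 'M[R]_n) (L : 'M[R]_m)
    (P Delta : 'M[R]_n) (eps : R) :
  continuous f ->
  coupling_matrix L -> irreducible_mx L -> \rank L = m.-1 ->
  posdef P -> 0 < eps -> QUAD f P Delta eps ->
  (forall u, Ran (P *m Delta) u <-> Ran (P *m Gamma) u) ->
  (exists (k : nat) (B : 'M[R]_(n, k)), P *m Gamma = B *m B^T) ->
  posdef_on (P *m Gamma) (Ran (P *m Gamma)) ->
  exists c0 : R, forall c : R, 0 < c -> c0 <= c ->
    forall x : 'I_m -> R -> 'cV[R]_n,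
      is_solution f Gamma L c x -> synchronizes x.
Proof.
move=> fc Lc Li Lrk Ppd epos HQ HRan [k0 [B HB]] _.
have [m0|m0] := posnP m.
  exists 0 => c _ _ x _ [i hi]; exfalso; by rewrite m0 in hi.
have [xi [xp xs xc]] := @exists_xi R m L m0 Lc Li Lrk.
have HR u : Ran (P *m Delta) u -> Ran (P *m Gamma) u by move=> h; apply/HRan.
have [k Hk] := key_bound Lc Li xp xs xc Ppd epos HR HB.
exists k%:R => c c0 kc x Hx.
pose e := fun s i => x i s - \sum_j xi j *: x j s.
pose V s := Q1 xi P (e s).
pose a : R := 2 * (k.+1%:R)^-1.
have a0 : 0 < a by rewrite mulr_gt0 // invr_gt0 ltr0n.
have dV (s : R) : 0 < s -> exists dv : R, is_derive s 1 V dv /\ dv <= - a * V s.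
  move=> s0; exact: (dV_bound Lc (proj1 Ppd) HQ xp xs xc HB (fun e S => proj1 (Hk e S)) kc Hx s0).
pose W s := V s * expR (a * s).
have dW (s : R) : 0 < s -> exists dw : R, is_derive s 1 W dw /\ dw <= 0.
  move=> s0; have [dv [Hd Hle]] := dV s s0.
  have Hlin : is_derive s 1 (fun r : R => a * r) a.
    have := is_deriveZ a (is_derive_id s (1 : R)).
    by move/is_derive_eq; apply; rewrite /GRing.scale /= mulr1.
  have Hexp : is_derive s 1 (fun r => expR (a * r)) (expR (a * s) * a).
    exact: (is_derive1_comp (f := expR) (g := fun r => a * r)).
  have HW := is_deriveM Hd Hexp.
  exists (V s *: (expR (a * s) * a) + expR (a * s) *: dv); split.
    by [].
  change (V s * (expR (a * s) * a) + expR (a * s) * dv <= 0).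
  have E0 : 0 < expR (a * s) by apply: expR_gt0.
  have : expR (a * s) * dv <= expR (a * s) * (- a * V s) by apply: ler_wpM2l => //; apply: ltW.
  have -> : expR (a * s) * (- a * V s) = - (V s * (expR (a * s) * a)) by ring.
  set p1 := V s * _; set p2 := expR (a * s) * dv; move=> *; lra.
have Wder (s : R) : 0 < s -> derivable W s 1.
  by move=> s0; have [dw [[Hd _] _]] := dW s s0.
have Wdec (t : R) : 1 <= t -> W t <= W 1.
  move=> t1; apply: (@ler0_derive1_nincr R W 1 t) => //.
  - move=> r; rewrite in_itv /= => /andP [r1 _]; apply: Wder; exact: lt_trans ltr01 r1.
  - move=> r; rewrite in_itv /= => /andP [r1 _].
    have [dw [Hd Hle]] := dW r (lt_trans ltr01 r1).
    by rewrite derive1E derive_val.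
  - apply: derivable_within_continuous => r; rewrite in_itv /= => /andP [r1 _].
    by apply: Wder; apply: lt_le_trans ltr01 r1.
have Vge0 s : 0 <= V s.
  apply: Q1_ge0 => // u; have [->|/(proj2 Ppd)/ltW//] := eqVneq u 0; by rewrite bil0l.
have Vb (t : R) : 1 <= t -> V t * (1 + a * t) <= W 1.
  move=> t1; apply: le_trans (Wdec t t1); apply: ler_wpM2l => //; exact: expR_ge1Dx.
have Se s : \sum_l xi l *: e s l = 0.
  rewrite /e; under eq_bigr do rewrite scalerBr.
  by rewrite sumrB -scaler_suml xs scale1r subrr.
have W1ge0 : 0 <= W 1 by apply: mulr_ge0 => //; apply: ltW; apply: expR_gt0.
move=> i j; apply/cvgr0Pnorm_lt => ep ep0.
pose d := ep / 3.
have d0 : 0 < d by apply: divr_gt0.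
pose d2 := d ^+ 2 / k.+1%:R.
have d20 : 0 < d2 by apply: divr_gt0; [apply: exprn_gt0 | apply: ltr0n].
exists (1 + W 1 / (d2 * a)); split; first exact: num_real.
move=> t Tt.
have Tge1 : 1 <= 1 + W 1 / (d2 * a).
  by rewrite lerDl; apply: divr_ge0 => //; apply: mulr_ge0; apply: ltW.
have t1 : 1 <= t by apply: le_trans Tge1 (ltW Tt).
have Vt : V t < d2.
  have hb := Vb t t1.
  have : W 1 < d2 * (a * t).
    have : W 1 / (d2 * a) < t by apply: le_lt_trans _ Tt; rewrite lerDr ler01.
    by rewrite ltr_pdivrMr ?mulr_gt0 // mulrC -mulrA.
  move=> h.
  have hpos : 0 < 1 + a * t by apply: ltr_pwDl => //; apply: mulr_ge0; apply: ltW => //; apply: lt_le_trans ltr01 t1.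
  rewrite -(ltr_pM2r hpos); apply: le_lt_trans hb _.
  rewrite mulrDr mulr1; move: h; have := d20; set p := d2 * (a * t); move=> *; lra.
have coord l b : `|e t l b 0| < d.
  have h1 := (proj2 (Hk (e t) (Se t))) l b.
  have h2 : e t l b 0 ^+ 2 < d ^+ 2.
    apply: le_lt_trans h1 _; rewrite -/(V t).
    by rewrite mulrC -ltr_pdivlMr ?ltr0n.
  have hn := real_normK (num_real (e t l b 0)); have hy := normr_ge0 (e t l b 0).
  move: hn hy h2; set y := `|e t l b 0|; set z := e t l b 0 ^+ 2; move=> *; nra.
have ne l : `|e t l| <= d by apply: norm_le_coord => [|b]; [apply: ltW | apply: ltW].
have -> : x i t - x j t = e t i - e t j by rewrite /e opprB addrA subrK.
apply: le_lt_trans (ler_normB _ _) _.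
have := ne i; have := ne j; rewrite /d; move=> *; lra.
Qed.
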